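(* The canonical collection $\mathcal{S}$ satisfies $$\sum_{S\in\mathcal{S}}c(T_S)\ \le\ \mathrm{val}(\mathcal{S})+2\cdot\mathrm{excess}(\mathrm{OPT}).$$
   Context: Steiner Forest: finite undirected graph $G=(V,E)$ with non-negative edge costs $(c_e)_{e\in E}$ and a set $\mathcal{D}$ of demand pairs $\{a,b\}\subseteq V$ (partners); feasible solutions are $F\subseteq E$ with each demand pair in one connected component of $(V,F)$, of cost $c(F)=\sum_{e\in F}c_e$. $\mathrm{OPT}$ is a fixed optimal solution that is inclusionwise minimal (no cost-$0$ edge can be omitted keeping feasibility). For $U\subseteq V$, $\delta(U)$ is the set of edges with exactly one endpoint in $U$; $U$ separates $S$ if $S\cap U\ne\emptyset$ and $S\setminus U\ne\emptyset$. The $\varepsilon$-extended moat-growing algorithm (fixed $\varepsilon\ge0$): time $t$ increases continuously from $0$ at unit rate; it maintains tight edges $F$ (initially empty), duals $y_S(t)\ge0$ (initially $0$), and budgets of components (initially $0$). $\mathcal{C}^t$ is the family of vertex sets of connected components of $(V,F)$. A component is demand-active if it contains a vertex not connected in $(V,F)$ to some partner; budget-active if not demand-active but with positive budget; active if either; $\mathcal{A}^t$ is the set of active components. Each $y_S$, $S\in\mathcal{A}^t$, grows at unit rate; budgets of demand-active components grow at rate $\varepsilon$ and of budget-active ones decrease at rate $1$; an edge $e$ with $\sum_{S:e\in\delta(S)}y_S(t)=c_e$ becomes tight and is added to $F$; merging components add budgets. $y_S=y_S(\infty)$; $\mathcal{U}_{\mathrm{sep}}$ is the set of $U\in\mathrm{supp}(y)$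 separating some demand pair; $\mathrm{excess}(F)=c(F)-\sum_{U\in\mathcal{U}_{\mathrm{sep}}}y_U$. The deactivation time $\tau_v$ of $v$ is the largest $t$ such that for all $s<t$, $v$ lies in a set of $\mathcal{A}^s$. Vertices $u,v$ are actively connected if for some $t$ they lie in a common set of $\mathcal{C}^t$ and $\tau_u,\tau_v\ge t$ (an equivalence relation). For each $U\in\mathcal{U}_{\mathrm{sep}}$ fix a demand pair $\varphi(U)$ separated by $U$. For a demand pair $d$, $\mathrm{val}(d)=\sum_{U:\varphi(U)=d}y_U$. A demand pair $\{a,b\}$ is satisfied by a set $S$ if $\{a,b\}\subseteq S$, and by a collection if by some member; $\mathrm{val}(\mathcal{S})$ is the sum of $\mathrm{val}(d)$ over demand pairs $d$ satisfied by $\mathcal{S}$. Canonical collection: start with a family $\mathcal{F}$ in which each tree (connected component) of $\mathrm{OPT}$ is its own forest; for each $U\in\mathcal{U}_{\mathrm{sep}}$, merge all forests of $\mathcal{F}$ that connect some demand pair separated by $U$ into a single forest. For each $F\in\mathcal{F}$ let $r_F$ be a vertex of $F$ with maximum deactivation time; for each connected component $T$ of $F$, let $S$ be the set of vertices of $T$ actively connected to $r_F$; if $S\ne\emptyset$, add $S$ to $\mathcal{S}$ and let $T_S$ be the minimal subtree of $T$ connecting $S$. *)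

(* Defs.v *)
From mathcomp Require Import all_boot all_order all_algebra.
From mathcomp Require Import boolp reals.

Set Implicit Arguments.
Unset Strict Implicit.
Unset Printing Implicit Defensive.

Import Order.TTheory GRing.Theory Num.Theory.
Local Open Scope ring_scope.

Section SteinerForest.

(* Instance: real type R, graph (V, E) with endpoint maps src/dst (an edge
   e joins src e and dst e, undirected), costs c, demand pairs D (each a
   2-element vertex set), and the parameter eps of the algorithm. *)
Variables (R : realType) (V E : finType) (src dst : E -> V) (c : E -> R)
          (D : {set {set V}}) (eps : R).

Definition adj (F : {set E}) : rel V :=
  [rel x y | [exists e in F, ((src e == x) && (dst e == y))
                             || ((src e == y) && (dst e == x))]].

Definition conn (F : {set E}) (u v : V) : bool := connect (adj F) u v.

Definition comp (F : {set E}) (v : V) : {set V} := [set w | conn F v w].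

Definition comps (F : {set E}) : {set {set V}} := [set comp F v | v : V].

Definition feasible (F : {set E}) : Prop :=
  forall d, d \in D -> forall a b, a \in d -> b \in d -> conn F a b.

Definition cost (F : {set E}) : R := \sum_(e in F) c e.

Definition separates (U S : {set V}) : bool :=
  (S :&: U != set0) && (S :\: U != set0).

Definition crosses (e : E) (S : {set V}) : bool :=
  (src e \in S) != (dst e \in S).

Definition load (y : {set V} -> R) (e : E) : R :=
  \sum_(S : {set V} | crosses e S) y S.

(* state: current time, tight edges F, duals y, budgets b (of components) *)
Record state := State {
  st_time : R;
  st_F : {set E};
  st_y : {set V} -> R;
  st_b : {set V} -> R }.

Definition demand_active (F : {set E}) (C : {set V}) : bool :=
  [exists v in C, exists d in D,
     (v \in d) && [exists w in d, ~~ conn F v w]].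

Definition budget_active (s : state) (C : {set V}) : bool :=
  ~~ demand_active (st_F s) C && (0 < st_b s C).

Definition is_active (s : state) (C : {set V}) : bool :=
  demand_active (st_F s) C || budget_active s C.

Definition active_comps (s : state) : {set {set V}} :=
  [set C in comps (st_F s) | is_active s C].

Definition halted (s : state) : bool := active_comps s == set0.

(* add all tight edges to F; merged components add up their budgets *)
Definition close (s : state) : state :=
  State (st_time s)
        (st_F s :|: [set e | c e <= load (st_y s) e])
        (st_y s)
        (fun C' => \sum_(C in comps (st_F s) | C \subset C') st_b s C).

(* number of active sets S with e in delta(S): rate of growth of load e *)
Definition rate (s : state) (e : E) : nat :=
  #|[set C in active_comps s | crosses e C]|.

(* times until the next events: an edge becomes tight, or a budget-active
   component's budget reaches 0 *)
Definition edge_events (s : state) : seq R :=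
  [seq (c e - load (st_y s) e) / (rate s e)%:R
     | e <- enum E & (e \notin st_F s) && (0 < rate s e)%N].

Definition budget_events (s : state) : seq R :=
  [seq st_b s C | C <- enum (active_comps s) & budget_active s C].

Definition delta (s : state) : R :=
  match edge_events s ++ budget_events s with
  | x :: xs => foldr Num.min x xs
  | [::] => 1
  end.

Definition advance (s : state) : state :=
  let d := delta s in
  State (st_time s + d) (st_F s)
        (fun S => if S \in active_comps s then st_y s S + d else st_y s S)
        (fun C => if C \in comps (st_F s) then
                    (if demand_active (st_F s) C then st_b s C + eps * d
                     else if budget_active s C then st_b s C - d
                     else st_b s C)
                  else st_b s C).

Definition step (s : state) : state :=
  let s' := close s in if halted s' then s' else advance s'.

Definition init_state : state :=
  State 0 set0 (fun _ => 0) (fun _ => 0).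

Definition run (k : nat) : state := iter k step init_state.

(* the state during phase k, i.e. on [t_k, t_{k+1}) (F, components, active
   sets; duals and budgets are those at time t_k) *)
Definition phase (k : nat) : state := close (run k).

Definition covers (k : nat) (t : R) : Prop :=
  st_time (phase k) <= t /\ (t < st_time (phase k.+1) \/ halted (phase k)).

Definition comps_at (t : R) (C : {set V}) : Prop :=
  exists k, covers k t /\ C \in comps (st_F (phase k)).

Definition active_at (t : R) (v : V) : Prop :=
  exists k, covers k t /\ [exists C in active_comps (phase k), v \in C].

Definition is_deact_time (v : V) (tau : R) : Prop :=
  (forall s, 0 <= s -> s < tau -> active_at s v) /\
  (forall t, (forall s, 0 <= s -> s < t -> active_at s v) -> t <= tau).

Definition actively_connected (tau : V -> R) (u v : V) : Prop :=
  exists t, (exists C, comps_at t C /\ u \in C /\ v \in C) /\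
            t <= tau u /\ t <= tau v.

Definition Usep (y : {set V} -> R) : {set {set V}} :=
  [set U : {set V} | (y U != 0) && [exists d in D, separates U d]].

Definition excess (y : {set V} -> R) (F : {set E}) : R :=
  cost F - \sum_(U in Usep y) y U.

Definition val (y : {set V} -> R) (phi : {set V} -> {set V}) (d : {set V}) : R :=
  \sum_(U in Usep y | phi U == d) y U.

Definition satisfied_by (Ss : {set {set V}}) (d : {set V}) : bool :=
  [exists S in Ss, d \subset S].

Definition valS (y : {set V} -> R) (phi : {set V} -> {set V})
    (Ss : {set {set V}}) : R :=
  \sum_(d in D | satisfied_by Ss d) val y phi d.

(* a forest is a set of trees of OPT, a tree being given by its vertex set;
   the forest connects d if d lies within one of its trees *)
Definition connects_sep (Fo : {set {set V}}) (U : {set V}) : bool :=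
  [exists T in Fo, exists d in D, (d \subset T) && separates U d].

Definition merge_step (U : {set V}) (fam : {set {set {set V}}})
    : {set {set {set V}}} :=
  let M := [set Fo in fam | connects_sep Fo U] in
  if M == set0 then fam
  else (fam :\: M) :|: [set \bigcup_(Fo in M) Fo].

Definition canon_forests (y : {set V} -> R) (OPT : {set E})
    : {set {set {set V}}} :=
  foldr merge_step [set [set T] | T in comps OPT] (enum (Usep y)).

Definition forest_verts (Fo : {set {set V}}) : {set V} := \bigcup_(T in Fo) T.

Definition canon_collection (y : {set V} -> R) (OPT : {set E})
    (tau : V -> R) (r : {set {set V}} -> V) : {set {set V}} :=
  [set S in [set [set v : V | (v \in T) &&
                               `[< actively_connected tau v (r Fo) >]]
               | Fo : {set {set V}} in canon_forests y OPT, T : {set V} in Fo]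
     | S != set0].

Definition connects_all (F : {set E}) (S : {set V}) : Prop :=
  forall u v, u \in S -> v \in S -> conn F u v.

Definition min_subtree (OPT : {set E}) (S : {set V}) (T : {set E}) : Prop :=
  T \subset OPT /\ connects_all T S /\
  (forall T' : {set E}, T' \proper T -> ~ connects_all T' S).

End SteinerForest.

(* Main.v *)
Require Import Defs.
From mathcomp Require Import all_boot all_order all_algebra.
From mathcomp Require Import boolp reals.
From mathcomp Require Import lra.
Import Order.TTheory GRing.Theory Num.Theory.
Local Open Scope ring_scope.
Set Implicit Arguments. Unset Strict Implicit. Unset Printing Implicit Defensive.

Section Graph.
Variables (V E : finType) (src dst : E -> V).
Implicit Types (F G : {set E}) (U C : {set V}) (x y z v w a b : V).

Lemma adjP (F : {set E}) x y : reflect (exists2 e, e \in F &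
   ((src e = x /\ dst e = y) \/ (src e = y /\ dst e = x))) (adj src dst F x y).
Proof.
rewrite /adj /=; apply: (iffP existsP).
  move=> [e /andP[eF /orP[/andP[/eqP h1 /eqP h2]|/andP[/eqP h1 /eqP h2]]]]; exists e => //; by [left|right].
move=> [e eF [[h1 h2]|[h1 h2]]]; exists e; rewrite eF /= h1 h2 !eqxx ?orbT //.
Qed.

Lemma adj_sym F : symmetric (adj src dst F).
Proof.
move=> x y; apply/adjP/adjP => -[e eF [[h1 h2]|[h1 h2]]]; exists e => //; tauto.
Qed.

Lemma conn_sym F x y : conn src dst F x y = conn src dst F y x.
Proof. exact: (sym_connect_sym (adj_sym F)). Qed.

Lemma conn_trans F x y z : conn src dst F x y -> conn src dst F y z -> conn src dst F x z.
Proof. exact: connect_trans. Qed.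

Lemma conn0 F x : conn src dst F x x.
Proof. exact: connect0. Qed.

Lemma conn_adj F x y : adj src dst F x y -> conn src dst F x y.
Proof. exact: connect1. Qed.

Lemma conn_mono F (F' : {set E}) x y : F \subset F' -> conn src dst F x y -> conn src dst F' x y.
Proof.
move=> sFF'; apply: connect_sub => a b /adjP[e eF h]; apply: connect1; apply/adjP.
by exists e => //; apply: (subsetP sFF').
Qed.

Lemma conn_edge F e : e \in F -> conn src dst F (src e) (dst e).
Proof. by move=> eF; apply: conn_adj; apply/adjP; exists e => //; left. Qed.

Lemma in_comp F v w : (w \in Defs.comp src dst F v) = conn src dst F v w.
Proof. by rewrite inE. Qed.

Lemma comp_in_comps F v : Defs.comp src dst F v \in comps src dst F.
Proof. exact: imset_f. Qed.

Lemma compsP F C : C \in comps src dst F -> exists v, C = Defs.comp src dst F v.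
Proof. by move=> /imsetP[v _ ->]; exists v. Qed.

Lemma comps_same F C x y : C \in comps src dst F -> x \in C -> y \in C ->
  conn src dst F x y.
Proof.
move=> /compsP[v ->]; rewrite !in_comp => h1 h2.
by apply: conn_trans h2; rewrite conn_sym.
Qed.

Lemma comps_closed F C x y : C \in comps src dst F -> x \in C ->
  conn src dst F x y -> y \in C.
Proof.
move=> /compsP[v ->]; rewrite !in_comp => h1 h2; exact: conn_trans h2.
Qed.

Lemma comp_self F v : v \in Defs.comp src dst F v.
Proof. by rewrite in_comp conn0. Qed.

Lemma comps_sub F C (C' : {set V}) x : C \in comps src dst F -> C' \in comps src dst F ->
  x \in C -> x \in C' -> C \subset C'.
Proof.
move=> hC hC' xC xC'; apply/subsetP => z zC.
apply: comps_closed hC' xC' _; exact: comps_same hC xC zC.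
Qed.

Lemma conn_ind F (P : V -> Prop) x y :
  P x -> (forall a b, P a -> adj src dst F a b -> P b) -> conn src dst F x y -> P y.
Proof.
move=> Px step /connectP[p pth ->]; elim: p x Px pth => [//|z p IH] x Px /= /andP[axz pth].
apply: IH pth; exact: step axz.
Qed.

Lemma side_pres F U a b : (forall f, f \in F -> ~~ crosses src dst f U) ->
  conn src dst F a b -> (a \in U) = (b \in U).
Proof.
move=> hF; apply: (@conn_ind F (fun z => (a \in U) = (z \in U))) => // z w -> /adjP[f fF h].
move: (hF f fF); rewrite /crosses negbK => /eqP.
by case: h => -[<- <-].
Qed.

Lemma cross_walk F U x y : conn src dst F x y -> x \in U -> y \notin U ->
  exists2 f, f \in F & crosses src dst f U && conn src dst F x (src f).
Proof.
move=> /connectP[p pth ->]; elim: p x pth => [|z p IH] x /=; first by move=> _ ->.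
move=> /andP[axz pth] xU lU.
have cxz : conn src dst F x z by exact: conn_adj.
case zU: (z \in U).
  have [f fF /andP[cf cz]] := IH z pth zU lU.
  by exists f => //; rewrite cf (conn_trans cxz cz).
move/adjP: axz => [f fF h]; exists f => //.
case: h => -[h1 h2]; rewrite /crosses h1 h2 xU zU /=.
  exact: conn0.
done.
Qed.

Lemma conn_restrict F (F' : {set E}) x y : conn src dst F x y ->
  (forall f, f \in F -> conn src dst F x (src f) -> f \in F') -> conn src dst F' x y.
Proof.
move=> /connectP[p pth ->]; elim: p x pth => [|z p IH] x /=; first by move=> _ _; exact: conn0.
move=> /andP[axz pth] hF.
have cxz : conn src dst F x z by exact: conn_adj.
apply: (@conn_trans _ _ z).
  apply: conn_adj; move/adjP: axz => [f fF h]; apply/adjP; exists f => //.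
  apply: hF => //; case: h => -[-> _] //; exact: conn0.
apply: IH pth _ => f fF czf; apply: hF => //; exact: conn_trans czf.
Qed.

Lemma remove_cross F U e x y : e \in F -> crosses src dst e U ->
  (forall f, f \in F -> crosses src dst f U -> f = e) ->
  conn src dst F x y -> (x \in U) = (y \in U) -> conn src dst (F :\ e) x y.
Proof.
move=> eF ce huniq cxy sxy.
set F' := F :\ e.
have nocross : forall f, f \in F' -> ~~ crosses src dst f U.
  move=> f; rewrite !inE => /andP[fe fF]; apply/negP => cf.
  by move: fe; rewrite (huniq f fF cf) eqxx.
pose Q z := conn src dst F' x z \/
   (conn src dst F' x (src e) /\ conn src dst F' (dst e) z) \/
   (conn src dst F' x (dst e) /\ conn src dst F' (src e) z).
have Qy : Q y.
  apply: (@conn_ind F Q x y) => //; first by left; exact: conn0.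
  move=> a b Qa /adjP[f fF h].
  case: (eqVneq f e) => [fe|fne].
    subst f; case: h => -[ha hb]; subst a b.
      case: Qa => [h|[[h _]|[h _]]]; [right;left | right;left | left] => //; split=> //; exact: conn0.
    case: Qa => [h|[[h _]|[h _]]]; [right;right | left | right;right] => //; split=> //; exact: conn0.
  have ab : adj src dst F' a b.
    apply/adjP; exists f => //; by rewrite !inE fne.
  case: Qa => [h1|[[h1 h2]|[h1 h2]]]; [left | right;left | right;right];
    try split => //; apply: conn_trans (conn_adj ab) => //.
move: ce; rewrite /crosses => ce.
case: Qy => [//|[[h1 h2]|[h1 h2]]].
  have := side_pres nocross h1; have := side_pres nocross h2.
  by move=> e1 e2; move: ce; rewrite -e2 e1 sxy eqxx.
have := side_pres nocross h1; have := side_pres nocross h2.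
by move=> e1 e2; move: ce; rewrite e1 -e2 sxy eqxx.
Qed.
End Graph.


Section Alg.
Variables (R : realType) (V E : finType) (src dst : E -> V) (c : E -> R)
          (D : {set {set V}}) (eps : R).
Hypothesis hc : forall e, 0 <= c e.

Local Notation PH := (phase src dst c D eps).
Local Notation RUN := (run src dst c D eps).
Local Notation CL := (close src dst c).
Local Notation ADV := (advance src dst c D eps).
Local Notation HALT := (halted src dst D).
Local Notation ACT := (active_comps src dst D).
Local Notation DEL := (delta src dst c D).
Local Notation RATE := (rate src dst D).
Local Notation LOAD := (load src dst).

Local Notation rmin := (@Order.min ring_display R).
Implicit Types (xs : seq R) (s : state R V E) (e : E) (U C : {set V}).
Definition seqmin (l : seq R) : R := match l with x :: xs => foldr rmin x xs | [::] => 1 end.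

Lemma foldr_min_le (x : R) xs (z : R) : z \in x :: xs -> foldr rmin x xs <= z.
Proof.
elim: xs z => [|a xs IH] z /=; first by rewrite inE => /eqP ->.
rewrite !inE => /orP[/eqP->|/orP[/eqP->|zin]]; rewrite ge_min ?lexx ?orbT //.
  by rewrite IH ?orbT // inE eqxx.
by rewrite IH ?orbT // inE zin orbT.
Qed.

Lemma seqmin_le l (z : R) : z \in l -> seqmin l <= z.
Proof. by case: l => [//|x xs]; exact: foldr_min_le. Qed.

Lemma seqmin_pos l : (forall z, z \in l -> 0 < z) -> 0 < seqmin l.
Proof.
case: l => [|x xs] /=; first by move=> _; exact: ltr01.
elim: xs => [|a xs IH] h /=; first by apply: h; rewrite inE eqxx.
rewrite lt_min h ?IH // => [z zin|]; first by apply: h; move: zin; rewrite !inE => /orP[->|->]; rewrite ?orbT.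
by rewrite !inE eqxx orbT.
Qed.

Lemma delta_seqmin s : DEL s = seqmin (edge_events src dst c D s ++ budget_events src dst D s).
Proof. by []. Qed.

Lemma delta_pos s : (forall e, c e <= LOAD (st_y s) e -> e \in st_F s) -> 0 < DEL s.
Proof.
move=> htight; rewrite delta_seqmin; apply: seqmin_pos => z; rewrite mem_cat.
case/orP => /mapP[x]; rewrite mem_filter.
  move=> /andP[/andP[xF rp] _] ->; apply: divr_gt0; last by rewrite ltr0n.
  rewrite subr_gt0; rewrite ltNge; apply: contra xF; exact: htight.
move=> /andP[ba _] ->; by case/andP: ba.
Qed.

Lemma delta_le_edge s e : e \notin st_F s -> (0 < RATE s e)%N ->
  DEL s <= (c e - LOAD (st_y s) e) / (RATE s e)%:R.
Proof.
move=> eF rp; rewrite delta_seqmin; apply: seqmin_le; rewrite mem_cat; apply/orP; left.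
apply: (map_f (fun e => (c e - LOAD (st_y s) e) / (RATE s e)%:R)).
by rewrite mem_filter eF rp mem_enum.
Qed.

Lemma tight_close s e : c e <= LOAD (st_y (CL s)) e -> e \in st_F (CL s).
Proof. by move=> h; rewrite /= inE; apply/orP; right; rewrite inE. Qed.

Lemma run_S k : RUN k.+1 = if HALT (PH k) then PH k else ADV (PH k).
Proof. by []. Qed.

Lemma phase_E k : PH k = CL (RUN k). Proof. by []. Qed.

Lemma delta_phase_pos k : 0 < DEL (PH k).
Proof. apply: delta_pos => e; exact: tight_close. Qed.

Lemma time_phase_S k : st_time (PH k.+1) = st_time (PH k) + (if HALT (PH k) then 0 else DEL (PH k)).
Proof.
have -> : st_time (PH k.+1) = st_time (RUN k.+1) by [].
by rewrite run_S; case: ifP => _ //=; rewrite addr0.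
Qed.

Lemma time_phase_le_S k : st_time (PH k) <= st_time (PH k.+1).
Proof. rewrite time_phase_S lerDl; case: ifP => // _; exact: ltW (delta_phase_pos k). Qed.

Lemma time_phase_lt_S k : ~~ HALT (PH k) -> st_time (PH k) < st_time (PH k.+1).
Proof. by move=> h; rewrite time_phase_S (negbTE h) ltrDl delta_phase_pos. Qed.

Lemma time_phase_mono j k : (j <= k)%N -> st_time (PH j) <= st_time (PH k).
Proof.
move=> /subnK <-; elim: (k - j)%N => [|m IH]; first by rewrite add0n.
by apply: le_trans IH _; rewrite addSn time_phase_le_S.
Qed.

Lemma time_phase0 : st_time (PH 0) = 0. Proof. by []. Qed.

Lemma time_phase_ge0 k : 0 <= st_time (PH k).
Proof. rewrite -time_phase0; exact: time_phase_mono. Qed.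

Lemma F_phase_S k : st_F (PH k) \subset st_F (PH k.+1).
Proof.
have -> : st_F (PH k.+1) = st_F (RUN k.+1) :|: [set e | c e <= LOAD (st_y (RUN k.+1)) e] by [].
rewrite run_S; case: ifP => _ /=; exact: subsetUl.
Qed.

Lemma F_phase_mono j k : (j <= k)%N -> st_F (PH j) \subset st_F (PH k).
Proof.
move=> /subnK <-; elim: (k - j)%N => [|m IH]; first by rewrite add0n.
by apply: subset_trans IH _; rewrite addSn F_phase_S.
Qed.

Lemma sum_comps_self (F : {set E}) C (f : {set V} -> R) : C \in comps src dst F ->
  \sum_(C0 in comps src dst F | C0 \subset C) f C0 = f C.
Proof.
move=> hC; apply: (big_pred1 C) => C0 /=; apply/andP/eqP.
  move=> [hC0 sub]; have [v0 ev0] := compsP hC0.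
  have v0C0 : v0 \in C0 by rewrite ev0 comp_self.
  apply/eqP; rewrite eqEsubset sub /=.
  exact: (comps_sub hC hC0 (subsetP sub _ v0C0) v0C0).
by move=> ->; rewrite hC subxx.
Qed.

Lemma close_halted s : HALT (CL s) ->
  st_F (CL (CL s)) = st_F (CL s) /\ HALT (CL (CL s)).
Proof.
move=> h.
have hF : st_F (CL (CL s)) = st_F (CL s) by rewrite /= -setUA setUid.
split => //; move: h; rewrite /halted => /eqP h0; apply/eqP/setP => C.
move/setP: h0 => h0; have := h0 C; rewrite !inE hF.
case Cc: (C \in comps src dst (st_F (CL s))) => //= hna.
rewrite /is_active /budget_active hF.
have -> : st_b (CL (CL s)) C = st_b (CL s) C by rewrite /= sum_comps_self.
exact: hna.
Qed.

Lemma halted_stable m : HALT (PH m) -> forall j, (m <= j)%N ->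
  [/\ st_F (PH j) = st_F (PH m), st_time (PH j) = st_time (PH m) & HALT (PH j)].
Proof.
move=> hm j /subnK <-; elim: (j - m)%N => [|d [IH1 IH2 IH3]]; first by rewrite add0n.
have e1 : PH (d.+1 + m) = CL (PH (d + m)).
  by rewrite addSn [LHS]phase_E run_S IH3.
have [h1 h2] := close_halted IH3.
by rewrite e1 h1 h2 IH1; split => //; rewrite -IH2.
Qed.

Lemma y_inv k : (forall U, 0 <= st_y (RUN k) U) /\
  (forall U, st_y (RUN k) U != 0 -> exists j, [/\ (j < k)%N, U \in ACT (PH j) & ~~ HALT (PH j)]).
Proof.
elim: k => [|k [IH1 IH2]]; first by split => // U /=; rewrite eqxx.
rewrite run_S; case: ifP => hk.
  split; first exact: IH1.
  by move=> U /IH2 [j [jk ja jh]]; exists j; split => //; exact: ltnW.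
split.
  move=> U /=; case: ifP => _; last exact: IH1.
  by apply: addr_ge0; [exact: IH1 | exact: ltW (delta_phase_pos k)].
move=> U /=; case: ifP => hU.
  by move=> _; exists k; split => //; rewrite hk.
by move=> /IH2 [j [jk ja jh]]; exists j; split => //; exact: ltnW.
Qed.

Lemma load_advance s e : LOAD (st_y (ADV s)) e = LOAD (st_y s) e + DEL s * (RATE s e)%:R.
Proof.
rewrite /load /=.
have -> : \sum_(S | crosses src dst e S) (if S \in ACT s then st_y s S + DEL s else st_y s S)
   = \sum_(S | crosses src dst e S) (st_y s S + (if S \in ACT s then DEL s else 0)).
  by apply: eq_bigr => S _; case: ifP; rewrite ?addr0.
rewrite big_split /=; congr (_ + _).
rewrite -big_mkcondr /=.
rewrite (eq_bigl (fun S => S \in [set C in ACT s | crosses src dst e C])); last first.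
  by move=> S; rewrite !inE andbC.
by rewrite sumr_const mulr_natr.
Qed.

Lemma rate_inF s e : e \in st_F s -> RATE s e = 0%N.
Proof.
move=> eF; apply/eqP; rewrite cards_eq0; apply/eqP/setP => C; rewrite !inE.
apply/negP => /andP[/andP[hC _] cr].
move: cr; rewrite /crosses; apply/negP; rewrite negbK; apply/eqP.
have ce := conn_edge src dst eF.
apply/idP/idP => h.
  exact: comps_closed hC h ce.
by apply: comps_closed hC h _; rewrite conn_sym.
Qed.

Lemma load_inv k e : LOAD (st_y (RUN k)) e <= c e.
Proof.
elim: k => [|k IH].
  rewrite /load /= big1 //.
rewrite run_S; case: ifP => hk; first exact: IH.
rewrite load_advance.
have IH' : LOAD (st_y (PH k)) e <= c e by exact: IH.
case eF: (e \in st_F (PH k)).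
  by rewrite rate_inF // mulr0 addr0.
case: (posnP (RATE (PH k) e)) => [->|rp]; first by rewrite mulr0 addr0.
have := delta_le_edge (negbT eF) rp.
rewrite ler_pdivlMr ?ltr0n // => h.
by rewrite -lerBrDl.
Qed.

Lemma canon_inv (y : {set V} -> R) (OPT : {set E}) :
  let fam := canon_forests src dst D y OPT in
  (forall Fo, Fo \in fam -> Fo \subset comps src dst OPT) /\
  (forall Fo1 Fo2 T, Fo1 \in fam -> Fo2 \in fam -> T \in Fo1 -> T \in Fo2 -> Fo1 = Fo2).
Proof.
rewrite /canon_forests; elim: (enum (Usep D y)) => [|U l [IH1 IH2]] /=.
  split.
    by move=> Fo /imsetP[T0 hT0 ->]; rewrite sub1set.
  move=> Fo1 Fo2 T /imsetP[T1 _ ->] /imsetP[T2 _ ->].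
  by rewrite !inE => /eqP -> /eqP ->.
set fam := foldr _ _ l.
rewrite /merge_step.
set M := [set Fo in fam | connects_sep D Fo U].
case: ifP => hM; first by split.
have memM : forall Fo, Fo \in M -> Fo \in fam by move=> Fo; rewrite inE => /andP[].
have bigM : forall T, T \in \bigcup_(Fo in M) Fo -> exists2 G, G \in M & T \in G.
  by move=> T /bigcupP.
split.
  move=> Fo; rewrite !inE => /orP[/andP[_ FoA]|/eqP->]; first exact: IH1.
  apply/subsetP => T /bigM [G GM TG]; exact: (subsetP (IH1 G (memM G GM))).
move=> Fo1 Fo2 T; rewrite !inE => /orP[/andP[n1 F1]|/eqP->] /orP[/andP[n2 F2]|/eqP->] //.
- exact: IH2.
- move=> T1 /bigM [G GM TG]; have e := IH2 _ _ _ F1 (memM G GM) T1 TG.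
  by move: GM; rewrite -e inE (negbTE n1).
- move=> /bigM [G GM TG] T2; have e := IH2 _ _ _ F2 (memM G GM) T2 TG.
  by move: GM; rewrite -e inE (negbTE n2).
Qed.

Section Tau.
Variables (n : nat) (hn : HALT (PH n)) (tau : V -> R)
  (htau : forall v, is_deact_time src dst c D eps v (tau v)).

Local Notation COV := (covers src dst c D eps).
Local Notation CAT := (comps_at src dst c D eps).
Local Notation ACTAT := (active_at src dst c D eps).
Local Notation AC := (actively_connected src dst c D eps tau).
Local Notation FP k := (st_F (PH k)).

Lemma cover_exists t : 0 <= t -> exists k, COV k t.
Proof.
move=> t0; case: (leP (st_time (PH n)) t) => htn.
  by exists n; split => //; right.
suff : forall m, t < st_time (PH m) -> exists k, COV k t by move=> h; exact: h htn.
elim => [|m IH] hm; first by move: hm; rewrite time_phase0 ltNge t0.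
case: (ltP t (st_time (PH m))) => h; first exact: IH.
by exists m; split => //; left.
Qed.

Lemma cov_mono k k' t t' : COV k t -> COV k' t' -> t <= t' -> FP k \subset FP k'.
Proof.
move=> [hk1 hk2] [hk1' hk2'] tt'; case: (leqP k k') => kk; first exact: F_phase_mono.
case: hk2' => [lt|hh].
  have := time_phase_mono kk => le1.
  by move: (le_lt_trans (le_trans le1 (le_trans hk1 tt')) lt); rewrite ltxx.
have [-> _ _] := halted_stable hh (ltnW kk); exact: subxx.
Qed.

Lemma cat_conn t C x y : CAT t C -> x \in C -> y \in C ->
  exists k, COV k t /\ conn src dst (FP k) x y.
Proof. move=> [k [hk hC]] xC yC; exists k; split => //; exact: comps_same hC xC yC. Qed.

Lemma cat_sub t t' C C' x : CAT t C -> CAT t' C' -> t <= t' -> x \in C -> x \in C' ->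
  C \subset C'.
Proof.
move=> [k [hk hC]] [k' [hk' hC']] tt' xC xC'; apply/subsetP => z zC.
apply: comps_closed hC' xC' _; apply: conn_mono (cov_mono hk hk' tt') _.
exact: comps_same hC xC zC.
Qed.

Lemma active_ext t0 C x y t : CAT t0 C -> x \in C -> y \in C -> t0 <= t ->
  ACTAT t y -> ACTAT t x.
Proof.
move=> hC xC yC t0t [k [hk /exists_inP[C' hC' yC']]].
have [k0 [hk0 cxy]] := cat_conn hC xC yC.
exists k; split => //; apply/exists_inP; exists C' => //.
move: hC'; rewrite inE => /andP[hC'c _].
apply: comps_closed hC'c yC' _; rewrite conn_sym.
exact: conn_mono (cov_mono hk0 hk t0t) cxy.
Qed.

Lemma tau_ext t0 C x y t : CAT t0 C -> x \in C -> y \in C -> t0 <= tau x ->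
  t <= tau y -> t <= tau x.
Proof.
move=> hC xC yC t0x ty; apply: (proj2 (htau x)) => s s0 st.
case: (ltP s t0) => hs.
  by apply: (proj1 (htau x)) => //; exact: lt_le_trans t0x.
apply: active_ext hC xC yC hs _.
by apply: (proj1 (htau y)) => //; exact: lt_le_trans ty.
Qed.

Lemma ac_sym x y : AC x y -> AC y x.
Proof. by move=> [t [[C [h1 [h2 h3]]] [h4 h5]]]; exists t; split; [exists C|]. Qed.

Lemma ac_trans x y z : AC x y -> AC y z -> AC x z.
Proof.
move=> [t1 [[C1 [hC1 [x1 y1]]] [tx1 ty1]]] [t2 [[C2 [hC2 [y2 z2]]] [ty2 tz2]]].
case: (leP t1 t2) => tt.
  exists t2; split; first by exists C2; split => //; split => //; exact: (subsetP (cat_sub hC1 hC2 tt y1 y2)).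
  by split => //; exact: (tau_ext hC1 x1 y1 tx1 ty2).
exists t1; split; first by exists C1; split => //; split => //; exact: (subsetP (cat_sub hC2 hC1 (ltW tt) y2 y1)).
by split => //; exact: (tau_ext hC2 z2 y2 tz2 ty1).
Qed.

Lemma demand_act_at t k x z d : d \in D -> x \in d -> z \in d -> COV k t ->
  ~~ conn src dst (FP k) x z -> ACTAT t x.
Proof.
move=> dD xd zd hk nc; exists k; split => //; apply/exists_inP.
exists (Defs.comp src dst (FP k) x); last exact: comp_self.
rewrite inE comp_in_comps /= /is_active; apply/orP; left.
apply/exists_inP; exists x; first exact: comp_self.
apply/exists_inP; exists d => //; rewrite xd /=; apply/exists_inP; exists z => //.
Qed.

Lemma conn_final x z d : d \in D -> x \in d -> z \in d -> conn src dst (FP n) x z.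
Proof.
move=> dD xd zd; apply: contraT => nc.
move: hn; rewrite /halted => /eqP /setP /(_ (Defs.comp src dst (FP n) x)).
rewrite !inE comp_in_comps /= /is_active => /negbT; rewrite negb_or => /andP[/negP nd _].
exfalso; apply: nd.
apply/exists_inP; exists x; first exact: comp_self.
apply/exists_inP; exists d => //; rewrite xd /=; apply/exists_inP; exists z => //.
Qed.

Lemma partner_ac x z d : d \in D -> x \in d -> z \in d -> AC x z.
Proof.
move=> dD xd zd.
have ex : exists k, conn src dst (FP k) x z by exists n; exact: conn_final dD xd zd.
case: (ex_minnP ex) => k0 ck0 kmin.
set t := st_time (PH k0).
have cov0 : COV k0 t.
  split; first exact: lexx.
  by case hh: (HALT (PH k0)); [right | left; apply: time_phase_lt_S; rewrite hh].
have tau_ge : forall a b, a \in d -> b \in d ->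
    (forall k, conn src dst (FP k) a b -> conn src dst (FP k) x z) -> t <= tau a.
  move=> a b ad bd hab; apply: (proj2 (htau a)) => s s0 st.
  have [k hk] := cover_exists s0.
  apply: (demand_act_at dD ad bd hk).
  have kk : (k < k0)%N.
    rewrite ltnNge; apply/negP => kk.
    have := time_phase_mono kk; move: hk => [hk1 _] le1.
    by move: (le_lt_trans (le_trans le1 hk1) st); rewrite ltxx.
  apply/negP => cab'.
  by have := kmin k (hab k cab'); rewrite leqNgt kk.
exists t; split.
  exists (Defs.comp src dst (FP k0) x); split; first by exists k0; split => //; exact: comp_in_comps.
  by rewrite comp_self in_comp.
split; first exact: (tau_ge x z).
apply: (tau_ge z x) => // k; by rewrite conn_sym.
Qed.

Lemma ysupp_cat (y : {set V} -> R) U : y = st_y (PH n) -> y U != 0 ->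
  exists t, 0 <= t /\ CAT t U.
Proof.
move=> -> hU; have [_ h2] := y_inv n.
have [j [jn ja jh]] := h2 U hU.
exists (st_time (PH j)); split; first exact: time_phase_ge0.
exists j; split; first by split; [exact: lexx | left; exact: time_phase_lt_S].
by move: ja; rewrite inE => /andP[].
Qed.

Lemma key_lemma (y : {set V} -> R) (hy : y = st_y (PH n)) U (hU : y U != 0)
  d (dD : d \in D) (sep : separates U d) (OPT : {set E})
  (feas : feasible src dst D OPT) e (eOPT : e \in OPT) (ecr : crosses src dst e U)
  (huniq : forall f, f \in OPT -> crosses src dst f U -> f = e)
  T (hT : T \in comps src dst OPT) (r0 : V) S
  (hS : S = [set v | (v \in T) && `[< AC v r0 >]]) TS
  (hmin : min_subtree src dst OPT S TS) (eTS : e \in TS) : d \subset S.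
Proof.
case: hmin => [TSsub [TSconn TSmin]].
move: sep; rewrite /separates => /andP[/set0Pn[a] /setIP[ad aU] /set0Pn[b] /setDP[bd bU]].
have sameside : (forall w1 w2, w1 \in S -> w2 \in S -> (w1 \in U) = (w2 \in U)) -> False.
  move=> hs; apply: (TSmin (TS :\ e)); first exact: properD1.
  move=> w1 w2 w1S w2S; apply: remove_cross eTS ecr _ (TSconn _ _ w1S w2S) (hs _ _ w1S w2S).
  by move=> f fTS; apply: huniq; exact: (subsetP TSsub).
have [u uS uU] : exists2 u, u \in S & u \in U.
  case: (pselect (exists2 u, u \in S & u \in U)) => // hno; exfalso; apply: sameside => w1 w2 w1S w2S.
  have h1 : w1 \notin U by apply/negP => w1U; apply: hno; exists w1.
  have h2 : w2 \notin U by apply/negP => w2U; apply: hno; exists w2.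
  by rewrite (negbTE h1) (negbTE h2).
have [v vS vU] : exists2 v, v \in S & v \notin U.
  case: (pselect (exists2 v, v \in S & v \notin U)) => // hno; exfalso; apply: sameside => w1 w2 w1S w2S.
  have h1 : w1 \in U by apply: contraT => w1U; exfalso; apply: hno; exists w1.
  have h2 : w2 \in U by apply: contraT => w2U; exfalso; apply: hno; exists w2.
  by rewrite h1 h2.
have memS : forall w, w \in S -> w \in T /\ AC w r0.
  by move=> w; rewrite hS inE => /andP[wT /asboolP].
have [uT ur] := memS u uS.
have [vT vr] := memS v vS.
have uv : AC u v := ac_trans ur (ac_sym vr).
have [s0 [s00 hs0]] := ysupp_cat hy hU.
have tu : s0 <= tau u.
  case: uv => t [[C [hC [uC vC]]] [tu _]].
  case: (leP t s0) => ts.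
    by move: vU; rewrite (subsetP (cat_sub hC hs0 ts uC uU) v vC).
  exact: le_trans (ltW ts) tu.
have ta : s0 <= tau a.
  apply: (proj2 (htau a)) => s sge slt.
  have [k hk] := cover_exists sge.
  apply: (demand_act_at dD ad bd hk); apply/negP => cab.
  have hC : CAT s (Defs.comp src dst (FP k) a) by exists k; split => //; exact: comp_in_comps.
  have sub := cat_sub hC hs0 (ltW slt) (comp_self _ _ _ _) aU.
  by move: bU; rewrite (subsetP sub b) // in_comp.
have au : AC a u by exists s0; split => //; exists U.
have ar : AC a r0 := ac_trans au ur.
have cu : conn src dst OPT u (src e).
  have [f fO /andP[fc cf]] := cross_walk (comps_same hT uT vT) uU vU.
  by rewrite -(huniq f fO fc).
have ca : conn src dst OPT a (src e).
  have [f fO /andP[fc cf]] := cross_walk (feas _ dD _ _ ad bd) aU bU.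
  by rewrite -(huniq f fO fc).
apply/subsetP => x xd; rewrite hS inE; apply/andP; split.
  apply: comps_closed hT uT _; apply: conn_trans cu _; apply: conn_trans (feas _ dD _ _ ad xd).
  by rewrite conn_sym.
apply/asboolP; exact: ac_trans (ac_sym (partner_ac dD ad xd)) ar.
Qed.

Section Main.
Variables (OPT : {set E}) (hOPTfeas : feasible src dst D OPT)
  (y : {set V} -> R) (hy : y = st_y (PH n)) (phi : {set V} -> {set V})
  (hphi : forall U, U \in Usep D y -> phi U \in D /\ separates U (phi U))
  (r : {set {set V}} -> V) (TS : {set V} -> {set E})
  (hTS : forall S, S \in canon_collection src dst c D eps y OPT tau r ->
             min_subtree src dst OPT S (TS S)).

Local Notation SS := (canon_collection src dst c D eps y OPT tau r).

Lemma SS_mem S : S \in SS -> exists Fo T,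
  [/\ Fo \in canon_forests src dst D y OPT, T \in Fo, T \in comps src dst OPT &
      S = [set v | (v \in T) && `[< AC v (r Fo) >]]].
Proof.
rewrite inE => /andP[/imset2P[Fo T hFo hT ->] _]; exists Fo, T; split => //.
exact: (subsetP ((proj1 (canon_inv y OPT)) Fo hFo)).
Qed.

Lemma TS_in_T (S T : {set V}) (X : {set E}) f : T \in comps src dst OPT -> S \subset T ->
  min_subtree src dst OPT S X -> f \in X -> src f \in T.
Proof.
move=> hT ST [Xsub [Xconn Xmin]] fX; apply: contraT => nf; exfalso.
apply: (Xmin (X :\ f) (properD1 fX)) => w1 w2 w1S w2S.
apply: conn_restrict (Xconn _ _ w1S w2S) _ => g gX cg.
rewrite !inE gX andbT; apply/eqP => gf; subst g.
move: nf; rewrite (comps_closed hT (subsetP ST _ w1S) (conn_mono Xsub cg)) //.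
Qed.

Lemma SS_uniq S1 S2 e : S1 \in SS -> S2 \in SS -> e \in TS S1 -> e \in TS S2 -> S1 = S2.
Proof.
move=> h1 h2 e1 e2.
have [Fo1 [T1 [hF1 hT1 hT1c hS1]]] := SS_mem h1.
have [Fo2 [T2 [hF2 hT2 hT2c hS2]]] := SS_mem h2.
have sub1 : S1 \subset T1 by rewrite hS1; apply/subsetP => v; rewrite inE => /andP[].
have sub2 : S2 \subset T2 by rewrite hS2; apply/subsetP => v; rewrite inE => /andP[].
have x1 := TS_in_T hT1c sub1 (hTS h1) e1.
have x2 := TS_in_T hT2c sub2 (hTS h2) e2.
have eT : T1 = T2.
  by apply/eqP; rewrite eqEsubset (comps_sub hT1c hT2c x1 x2) (comps_sub hT2c hT1c x2 x1).
subst T2.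
have eF := (proj2 (canon_inv y OPT)) _ _ _ hF1 hF2 hT1 hT2.
by rewrite hS1 hS2 eF.
Qed.

Definition X1 := [set e | [exists S in SS, e \in TS S]].

Lemma X1_OPT : X1 \subset OPT.
Proof.
apply/subsetP => e; rewrite inE => /exists_inP[S hS eS].
by case: (hTS hS) => sub _; exact: (subsetP sub).
Qed.

Lemma LHS_eq : \sum_(S in SS) cost c (TS S) = \sum_(e in X1) c e.
Proof.
rewrite /cost (exchange_big_dep (fun e => e \in X1)) /=; last first.
  by move=> S e hS eS; rewrite inE; apply/exists_inP; exists S.
apply: eq_bigr => e; rewrite inE => /exists_inP[S0 hS0 eS0].
rewrite (big_pred1 S0) // => S /=; apply/andP/eqP; last by move=> ->.
by move=> [hS eS]; exact: SS_uniq hS hS0 eS eS0.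
Qed.

Lemma load_sum (X : {set E}) : \sum_(e in X) LOAD y e =
  \sum_U y U *+ #|[set e in X | crosses src dst e U]|.
Proof.
rewrite /load (exchange_big_dep predT) //=; apply: eq_bigr => U _.
rewrite -sumr_const; apply: eq_bigl => e; by rewrite !inE.
Qed.

Lemma y_ge0 U : 0 <= y U.
Proof. rewrite hy; exact: (proj1 (y_inv n)). Qed.

Lemma slack_ge0 e : 0 <= c e - LOAD y e.
Proof. rewrite subr_ge0 hy; exact: load_inv. Qed.

Lemma valS_eq : valS D y phi SS =
  \sum_U (if (U \in Usep D y) && satisfied_by SS (phi U) then y U else 0).
Proof.
rewrite /valS /val (exchange_big_dep (fun U => U \in Usep D y)) /=; last first.
  by move=> d U _ /andP[].
rewrite big_mkcond /=; apply: eq_bigr => U _.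
case: (boolP (U \in Usep D y)) => hU //=.
have [pD _] := hphi hU.
case hsat: (satisfied_by SS (phi U)) => /=.
  rewrite (big_pred1 (phi U)) // => d /=.
  apply/idP/idP => [/andP[_ /eqP <-] //|/eqP ->]; by rewrite eqxx andbT pD hsat.
rewrite big_pred0 // => d /=; apply/negP => /andP[/andP[_ hs] /eqP ed].
by move: hsat; rewrite ed hs.
Qed.

Lemma perU U :
  y U *+ #|[set e in X1 | crosses src dst e U]| + 2 * (if U \in Usep D y then y U else 0)
  <= (if (U \in Usep D y) && satisfied_by SS (phi U) then y U else 0)
     + 2 * (y U *+ #|[set e in OPT | crosses src dst e U]|).
Proof.
set aN := #|[set e in X1 | crosses src dst e U]|.
set kN := #|[set e in OPT | crosses src dst e U]|.
have y0 := y_ge0 U.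
have ak : (aN <= kN)%N.
  apply: subset_leq_card; apply/subsetP => e; rewrite !inE => /andP[eX ->].
  have eX1 : e \in X1 by rewrite inE.
  by rewrite (subsetP X1_OPT e eX1).
have yak : y U * aN%:R <= y U * kN%:R by apply: (ler_wpM2l y0); rewrite ler_nat.
rewrite -[y U *+ aN]mulr_natr -[y U *+ kN]mulr_natr.
case: (boolP (U \in Usep D y)) => hU /=; last first.
  have : 0 <= y U * kN%:R by apply: mulr_ge0.
  lra.
have hUy : y U != 0 by move: hU; rewrite inE => /andP[].
have [pD psep] := hphi hU.
have k1 : (1 <= kN)%N.
  move: (psep); rewrite /separates => /andP[/set0Pn[a /setIP[ad aU]] /set0Pn[b /setDP[bd bU]]].
  have [f fO /andP[fc _]] := cross_walk (hOPTfeas pD ad bd) aU bU.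
  by rewrite card_gt0; apply/set0Pn; exists f; rewrite inE fO fc.
have yk1 : y U <= y U * kN%:R.
  by rewrite -{1}(mulr1 (y U)); apply: (ler_wpM2l y0); rewrite ler1n.
case hsat: (satisfied_by SS (phi U)) => /=; first lra.
case: (ltngtP kN 1) => hk; first by rewrite ltnNge k1 in hk.
  have yk2 : 2 * y U <= y U * kN%:R.
    by rewrite mulrC; apply: (ler_wpM2l y0); rewrite (ler_nat R 2).
  lra.
have a0 : aN = 0%N.
  apply/eqP; rewrite cards_eq0; apply/eqP/setP => e; rewrite !inE; apply/negP => /andP[eX1 ecr].
  have eOPT : e \in OPT by apply: (subsetP X1_OPT); rewrite inE.
  move/eqP: hk; rewrite /kN => /cards1P[e0 he0].
  have huniq : forall f, f \in OPT -> crosses src dst f U -> f = e0.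
    by move=> f fO fc; apply/set1P; rewrite -he0 inE fO fc.
  have ee0 := huniq e eOPT ecr; subst e0.
  move: eX1 => /exists_inP[S hS eS].
  have [Fo [T [hFo hTFo hT hSdef]]] := SS_mem hS.
  have sub := key_lemma hy hUy pD psep hOPTfeas eOPT ecr huniq hT hSdef (hTS hS) eS.
  by move: hsat; rewrite /satisfied_by; move/negbT/negP; apply; apply/exists_inP; exists S.
rewrite a0 hk mulr0 mulr1; lra.
Qed.

Lemma main_ineq : \sum_(S in SS) cost c (TS S) <= valS D y phi SS + 2 * excess c D y OPT.
Proof.
rewrite LHS_eq valS_eq /excess.
have e1 : \sum_(e in X1) c e = \sum_(e in X1) LOAD y e + \sum_(e in X1) (c e - LOAD y e).
  by rewrite -big_split /=; apply: eq_bigr => e _; rewrite addrC subrK.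
have e2 : cost c OPT = \sum_(e in OPT) LOAD y e + \sum_(e in OPT) (c e - LOAD y e).
  by rewrite /cost -big_split /=; apply: eq_bigr => e _; rewrite addrC subrK.
have sl : \sum_(e in X1) (c e - LOAD y e) <= \sum_(e in OPT) (c e - LOAD y e).
  rewrite [X in _ <= X](big_setID X1) /= (setIidPr X1_OPT) lerDl.
  by apply: sumr_ge0 => e _; exact: slack_ge0.
have slp : 0 <= \sum_(e in OPT) (c e - LOAD y e).
  by apply: sumr_ge0 => e _; exact: slack_ge0.
have hsum : \sum_U (y U *+ #|[set e in X1 | crosses src dst e U]| + 2 * (if U \in Usep D y then y U else 0)) <= \sum_U ((if (U \in Usep D y) && satisfied_by SS (phi U) then y U else 0) + 2 * (y U *+ #|[set e in OPT | crosses src dst e U]|)).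
  by apply: ler_sum => U _; exact: perU.
rewrite !big_split /= -!mulr_sumr in hsum.
have e3 : \sum_(U in Usep D y) y U = \sum_U (if U \in Usep D y then y U else 0).
  by rewrite big_mkcond.
rewrite e1 e2 !load_sum e3.
lra.
Qed.
End Main.

End Tau.
End Alg.

Unset Implicit Arguments.
Theorem lemma6p4 (R : realType) (V E : finType) (src dst : E -> V)
    (c : E -> R) (D : {set {set V}}) (eps : R)
    (* instance assumptions *)
    (hc : forall e, 0 <= c e)
    (hD : forall d, d \in D -> #|d| = 2%N)
    (heps : 0 <= eps)
    (* OPT: a fixed inclusionwise minimal optimal solution *)
    (OPT : {set E})
    (hOPTfeas : feasible src dst D OPT)
    (hOPTopt : forall F, feasible src dst D F -> cost c OPT <= cost c F)
    (hOPTmin : forall e, e \in OPT -> c e = 0 ->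
                 ~ feasible src dst D (OPT :\ e))
    (* the algorithm has terminated at phase n; y = y(oo) *)
    (n : nat) (hn : halted src dst D (phase src dst c D eps n))
    (y : {set V} -> R) (hy : y = st_y (phase src dst c D eps n))
    (* deactivation times *)
    (tau : V -> R) (htau : forall v, is_deact_time src dst c D eps v (tau v))
    (* the fixed choice phi(U) of a separated demand pair *)
    (phi : {set V} -> {set V})
    (hphi : forall U, U \in Usep D y -> phi U \in D /\ separates U (phi U))
    (* roots r_F of maximum deactivation time *)
    (r : {set {set V}} -> V)
    (hr : forall Fo, Fo \in canon_forests src dst D y OPT ->
            r Fo \in forest_verts Fo /\
            (forall v, v \in forest_verts Fo -> tau v <= tau (r Fo)))
    (* the minimal subtrees T_S *)
    (TS : {set V} -> {set E})
    (hTS : forall S, S \in canon_collection src dst c D eps y OPT tau r ->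
             min_subtree src dst OPT S (TS S)) :
  \sum_(S in canon_collection src dst c D eps y OPT tau r) cost c (TS S)
    <= valS D y phi (canon_collection src dst c D eps y OPT tau r)
       + 2 * excess c D y OPT.
Proof.
exact: (main_ineq hc hn htau hOPTfeas hy hphi hTS).
Qed.
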